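(* Let $\Pi$ be a score-at-end WPTS, let $\Phi_{\mathcal B}$ be the predicate $\bigwedge_{x\in V_p}x\in\mathcal B(x)$ for a truncation function $\mathcal B$, and let $\mathcal M:\mathbb{R}^{|V_p|}\to[0,\infty)$ be a bounded function. Let $\Pi_{\mathcal B,\mathcal M}$ be the truncated WPTS. (1) Suppose that for every transition $\langle\ell,\phi,F_1,\dots,F_k\rangle$ of $\Pi$ having a fork whose destination is not $\ell_{\mathrm{out}}$, and every valuation $\mathbf v$ with $(\ell,\mathbf v)$ reachable in $\Pi$, $\mathbf v\models\phi$ and $\mathbf v\not\models\Phi_{\mathcal B}$, we have $\mathrm{ew}_\Pi(\ell,\mathbf v)\le\mathcal M(\mathbf v)$. Then $[\![\Pi]\!]_{\mathbf v_{\mathrm{init}}}(\mathbb{R}^{|V_p|})\le[\![\Pi_{\mathcal B,\mathcal M}]\!]_{\mathbf v_{\mathrm{init}}}(\mathbb{R}^{|V_p|})$ for all $\mathbf v_{\mathrm{init}}\in\operatorname{supp}\mu_{\mathrm{init}}$. (2) If instead $\mathrm{ew}_\Pi(\ell,\mathbf v)\ge\mathcal M(\mathbf v)$ for all such $(\ell,\mathbf v)$, then $[\![\Pi]\!]_{\mathbf v_{\mathrm{init}}}(\mathbb{R}^{|V_p|})\ge[\![\Pi_{\mathcal B,\mathcal M}]\!]_{\mathbf v_{\mathrm{init}}}(\mathbb{R}^{|V_p|})$ for all $\mathbf v_{\mathrm{init}}\in\operatorname{supp}\mu_{\mathrm{init}}$.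
   Context: A WPTS is a tuple $\Pi=(V_p,V_r,L,\ell_{\mathrm{init}},\ell_{\mathrm{out}},\mu_{\mathrm{init}},\mathcal D,\mathfrak T)$: $V_p,V_r$ finite disjoint sets of program and sampling variables; $L$ finite set of locations with $\ell_{\mathrm{init}},\ell_{\mathrm{out}}\in L$; $\mu_{\mathrm{init}}$ a probability distribution on $\mathbb{R}^{|V_p|}$ with bounded support; $\mathcal D$ a product probability distribution on $\mathbb{R}^{|V_r|}$; $\mathfrak T$ a finite set of transitions $\langle\ell,\phi,F_1,\dots,F_k\rangle$ with measurable guard $\phi$ and forks $F_j=\langle\ell'_j,p_j,\mathrm{upd}_j,\mathrm{wt}_j\rangle$ ($p_j\in(0,1]$, $\sum_jp_j=1$, measurable $\mathrm{upd}_j:\mathbb{R}^{|V_p|}\times\mathbb{R}^{|V_r|}\to\mathbb{R}^{|V_p|}$, measurable $\mathrm{wt}_j:\mathbb{R}^{|V_p|}\times\mathbb{R}^{|V_r|}\to[0,\infty)$), such that for each location $\ell$ that is not a termination location and each $\mathbf v$ exactly one transition from $\ell$ has guard satisfied by $\mathbf v$. Runs from a state $(\ell,\mathbf v)$ start with weight $1$; at a termination location the run stays; otherwise the enabled transition is taken, fork $j$ chosen with probability $p_j$, $\mathbf r\sim\mathcal D$ sampled, next weighted state $(\ell'_j,\mathrm{upd}_j(\mathbf v,\mathbf r),w\cdot\mathrm{wt}_j(\mathbf v,\mathbf r))$. $T$ is the first time a termination location is reached, $\hat w_T$ the weight then. $\mathrm{ew}_\Pi(\ell,\mathbf v):=\mathbb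 E_{(\ell,\mathbf v)}[\mathbf 1_{T<\infty}\hat w_T]$ and $[\![\Pi]\!]_{\mathbf v}(\mathbb{R}^{|V_p|}):=\mathrm{ew}_\Pi(\ell_{\mathrm{init}},\mathbf v)$. A state is reachable if it occurs in some run from $(\ell_{\mathrm{init}},\mathbf v_0)$, $\mathbf v_0\in\operatorname{supp}\mu_{\mathrm{init}}$. $\Pi$ is score-at-end if: (i) $\mathbb P_{(\ell_{\mathrm{init}},\mathbf v)}(T<\infty)=1$ for all $\mathbf v\in\operatorname{supp}\mu_{\mathrm{init}}$; (ii) exactly one transition has a fork with destination $\ell_{\mathrm{out}}$, of the form $\langle\ell,\phi,F\rangle$ with single fork $F=\langle\ell_{\mathrm{out}},1,\mathrm{id},\mathrm{wt}\rangle$, $\mathrm{id}(\mathbf v,\mathbf r)=\mathbf v$, $0\le\mathrm{wt}\le M$ for a constant $M>0$; (iii) every other fork has score function constantly $1$. A truncation function $\mathcal B$ maps each $x\in V_p$ to a bounded interval $\mathcal B(x)\subseteq\mathbb{R}$. The truncated WPTS $\Pi_{\mathcal B,\mathcal M}$ has locations $L\cup\{\sharp\}$ with $\sharp$ fresh, both $\ell_{\mathrm{out}}$ and $\sharp$ are termination locations (runs stay there), the same $V_p,V_r,\ell_{\mathrm{init}},\mu_{\mathrm{init}},\mathcal D$, and transitions: for each transition $\langle\ell,\phi,F_1,\dots,F_k\rangle$ of $\Pi$ with $\ell\ne\ell_{\mathrm{out}}$, (a) $\langle\ell,\phi\wedge\Phi_{\mathcal B},F_1,\dots,F_k\rangle$,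 and (b) $\langle\ell,\phi\wedge\neg\Phi_{\mathcal B},F^{\sharp}_1,\dots,F^{\sharp}_k\rangle$ where for $F=\langle\ell',p,\mathrm{upd},\mathrm{wt}\rangle$, $F^\sharp:=F$ if $\ell'=\ell_{\mathrm{out}}$ and otherwise $F^\sharp:=\langle\sharp,p,\mathrm{upd},\mathcal M'\rangle$ with score function $\mathcal M'(\mathbf v,\mathbf r):=\mathcal M(\mathbf v)$. *)

(* Defs.v *)
From Stdlib Require List.
From HB Require Import structures.
From mathcomp Require Import all_boot all_order all_algebra.
From mathcomp Require Import all_classical all_reals all_analysis.
Import Order.TTheory GRing.Theory Num.Theory.

Set Implicit Arguments.
Unset Strict Implicit.
Unset Printing Implicit Defensive.

Local Open Scope classical_set_scope.
Local Open Scope ring_scope.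

(* Valuations of the program variables V_p are np.-tuple R (V_p = 'I_np),
   valuations of the sampling variables V_r are nr.-tuple R (V_r = 'I_nr).
   n.-tuple R carries the product (Borel) sigma-algebra of mathcomp-analysis. *)

Section WPTS.
Variables (R : realType) (L : Type) (np nr : nat).

Record fork := Fork {
  f_dest : L;
  f_prob : R;
  f_upd  : np.-tuple R * nr.-tuple R -> np.-tuple R;
  f_wt   : np.-tuple R * nr.-tuple R -> R }.

Record transition := Trans {
  t_src   : L;
  t_guard : set (np.-tuple R);
  t_forks : seq fork }.

(* A WPTS; [term] is the set of termination locations (runs stay there). *)
Record wpts := WPTS {
  linit   : L;
  lout    : L;
  term    : L -> bool;
  mu_init : probability (np.-tuple R) R;
  distr   : probability (nr.-tuple R) R;
  trans   : seq transition }.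

End WPTS.

Arguments Fork {R L np nr}.
Arguments Trans {R L np nr}.
Arguments WPTS {R L np nr}.

Section Semantics.
Variables (R : realType) (n : nat).

Definition supp (mu : probability (n.-tuple R) R) (v : n.-tuple R) : Prop :=
  forall e : R, 0 < e ->
    (0 < mu [set w | forall i : 'I_n, (`|tnth w i - tnth v i| < e)%R])%E.

Definition bounded_support (mu : probability (n.-tuple R) R) : Prop :=
  exists C : R, forall v, supp mu v -> forall i : 'I_n, `|tnth v i| <= C.

Definition product_distr (mu : probability (n.-tuple R) R) : Prop :=
  exists Ds : 'I_n -> probability R R,
    forall A : 'I_n -> set R, (forall i, measurable (A i)) ->
      mu [set w | forall i : 'I_n, A i (tnth w i)] = (\prod_(i < n) Ds i (A i))%E.

End Semantics.

Section WPTSSemantics.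
Variables (R : realType) (L : finType) (np nr : nat).
Local Notation fork := (fork R L np nr).
Local Notation transition := (transition R L np nr).
Local Notation wpts := (wpts R L np nr).

Definition wf_fork (f : fork) : Prop :=
  [/\ 0 < f_prob f <= 1,
      measurable_fun setT (f_upd f),
      measurable_fun setT (f_wt f) &
      forall x, 0 <= f_wt f x].

Definition well_formed (P : wpts) : Prop :=
  [/\ forall t, List.In t (trans P) ->
        [/\ measurable (t_guard t),
            (forall f, List.In f (t_forks t) -> wf_fork f) &
            \sum_(f <- t_forks t) f_prob f = 1],
      forall l, ~~ term P l -> forall v : np.-tuple R,
        count (fun t => (t_src t == l) && `[< t_guard t v >]) (trans P) = 1%N,
      bounded_support (mu_init P) &
      product_distr (distr P)].

(* ewn_gen P g k l v = E_(l,v)[ 1_{T <= k} * prod of the g-scores up to T ]: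
   the finite-horizon expected weight, written out as iterated integrals
   (one step: the unique enabled transition, fork j with prob. p_j, r ~ D). *)
Fixpoint ewn_gen (P : wpts) (g : fork -> np.-tuple R * nr.-tuple R -> R)
    (k : nat) (l : L) (v : np.-tuple R) {struct k} : \bar R :=
  if term P l then 1%E else
  match k with
  | 0 => 0%E
  | k'.+1 =>
    (\sum_(t <- trans P | (t_src t == l) && `[< t_guard t v >])
      \sum_(f <- t_forks t)
        (f_prob f)%:E *
        \int[distr P]_r ((g f (v, r))%:E *
                          ewn_gen P g k' (f_dest f) (f_upd f (v, r))))%E
  end.

(* ew_Pi(l, v) = E_(l,v)[1_{T < oo} w_T] = sup_k E_(l,v)[1_{T <= k} w_T]
   (monotone convergence). *)
Definition ew (P : wpts) (l : L) (v : np.-tuple R) : \bar R :=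
  ereal_sup (range (fun k => ewn_gen P (@f_wt R L np nr) k l v)).

Definition term_prob (P : wpts) (l : L) (v : np.-tuple R) : \bar R :=
  ereal_sup (range (fun k => ewn_gen P (fun _ _ => 1) k l v)).

Definition denot (P : wpts) (v : np.-tuple R) : \bar R := ew P (linit P) v.

Inductive reachable (P : wpts) : L -> np.-tuple R -> Prop :=
| reach_init v : supp (mu_init P) v -> reachable P (linit P) v
| reach_step l v t f r :
    reachable P l v -> ~~ term P l ->
    List.In t (trans P) -> t_src t = l -> t_guard t v ->
    List.In f (t_forks t) -> supp (distr P) r ->
    reachable P (f_dest f) (f_upd f (v, r)).

Definition score_at_end (P : wpts) : Prop :=
  [/\
      forall v, supp (mu_init P) v -> term_prob P (linit P) v = 1%E,
      count (fun t => has (fun f => f_dest f == lout P) (t_forks t)) (trans P) = 1%N,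
      (forall t, List.In t (trans P) ->
         has (fun f => f_dest f == lout P) (t_forks t) ->
         exists F, [/\ t_forks t = [:: F], f_dest F = lout P, f_prob F = 1,
                       f_upd F = fst &
                       exists Mc : R, 0 < Mc /\ forall x, 0 <= f_wt F x <= Mc]) &
      forall t f, List.In t (trans P) -> List.In f (t_forks t) ->
        f_dest f != lout P -> forall x, f_wt f x = 1].

Definition itv_bounded (i : interval R) : bool :=
  match i with Interval (BSide _ _) (BSide _ _) => true | _ => false end.

Definition PhiB (B : 'I_np -> interval R) (v : np.-tuple R) : Prop :=
  forall x : 'I_np, tnth v x \in B x.

Definition lift_fork (f : fork) : Defs.fork R (option L) np nr :=
  Fork (Some (f_dest f)) (f_prob f) (f_upd f) (f_wt f).

Definition sharp_fork (P : wpts) (M : np.-tuple R -> R) (f : fork)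
    : Defs.fork R (option L) np nr :=
  if f_dest f == lout P then lift_fork f
  else Fork None (f_prob f) (f_upd f) (fun x => M x.1).

Definition trunc_trans (P : wpts) (B : 'I_np -> interval R)
    (M : np.-tuple R -> R) (t : transition)
    : seq (Defs.transition R (option L) np nr) :=
  if t_src t == lout P then [::]
  else [:: Trans (Some (t_src t)) (t_guard t `&` PhiB B) (map lift_fork (t_forks t));
           Trans (Some (t_src t)) (t_guard t `&` ~` PhiB B)
                 (map (sharp_fork P M) (t_forks t))].

(* Pi_{B,M}: locations option L, None = sharp; l_out and sharp terminal. *)
Definition truncated (P : wpts) (B : 'I_np -> interval R)
    (M : np.-tuple R -> R) : Defs.wpts R (option L) np nr :=
  WPTS (Some (linit P)) (Some (lout P))
       (fun l => if l is Some l' then term P l' else true)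
       (mu_init P) (distr P)
       (flatten (map (trunc_trans P B M) (trans P))).

End WPTSSemantics.

(* Main.v *)
Set Warnings "-notation-overridden,-ambiguous-paths,-notation-incompatible-prefix".
Require Import Defs.
From Stdlib Require List.
From HB Require Import structures.
From mathcomp Require Import all_boot all_order all_algebra.
From mathcomp Require Import all_classical all_reals all_analysis.
From mathcomp Require Import measurable_realfun.
Import Order.TTheory GRing.Theory Num.Theory.
Local Open Scope classical_set_scope.
Local Open Scope ring_scope.
Section SuppNull.
Variables (R : realType) (n : nat).

Definition tball (c : n.-tuple R) (e : R) : set (n.-tuple R) :=
  [set w | forall i : 'I_n, `|tnth w i - tnth c i| < e].

Lemma tball_measurable c e : measurable (tball c e).
Proof.
have -> : tball c e = \bigcap_(i in [set: 'I_n])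
   (setT `&` (fun w => tnth w i) @^-1` `](tnth c i - e), (tnth c i + e)[%classic).
  apply/seteqP; split => w /=.
    by move=> H i _; split => //=; rewrite in_itv /= -ltr_distlC distrC; exact: H.
  by move=> H i; have [_ /=] := H i Logic.I; rewrite in_itv /= -ltr_distlC distrC.
apply: fin_bigcap_measurable; first exact: finite_finset.
move=> i _; apply: (measurable_tnth i) => //; exact: measurable_itv.
Qed.

Lemma supp_negligible (mu : probability (n.-tuple R) R) :
  mu.-negligible (~` (supp mu)).
Proof.
pose F (k : nat) : set (n.-tuple R) :=
  match unpickle k with
  | Some (q, rho) =>
      let c := [tuple of map (@ratr R) (q : n.-tuple rat)] in
      if pselect (mu (tball c (ratr rho)) = 0%E) then tball c (ratr rho) else set0
  | None => set0 end.
apply: (@negligibleS _ _ _ mu (\bigcup_k F k)); last first.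
  apply: negligible_bigcup => k; rewrite /F.
  case: (unpickle k) => [[q rho]|]; last exact: negligible_set0.
  case: pselect => H; last exact: negligible_set0.
  by exists (tball [tuple of map (@ratr R) (q : n.-tuple rat)] (ratr rho)); split => //;
    exact: tball_measurable.
move=> r /= nr.
have [e e0 me] : exists2 e : R, 0 < e & mu (tball r e) = 0%E.
  apply: contra_notP nr => H e e0; rewrite lt0e measure_ge0 andbT.
  by apply/eqP => He; apply: H; exists e.
have [rho rhoP] := @rat_in_itvoo R 0 (e / 2) ltac:(by rewrite divr_gt0).
move: rhoP; rewrite in_itv /= => /andP[rho0 rhoe].
have Hq : forall i : 'I_n, exists q : rat, ratr q \in `](tnth r i - ratr rho), (tnth r i + ratr rho)[.
  move=> i; apply: rat_in_itvoo; by rewrite ltrBlDr -addrA ltrDl addr_gt0.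
pose q := [tuple xchoose (Hq i) | i < n].
pose c := [tuple of map (@ratr R) (q : n.-tuple rat)].
have cP i : `|tnth r i - tnth c i| < ratr rho.
  rewrite /c tnth_map /q tnth_mktuple.
  by have := xchooseP (Hq i); rewrite in_itv /= -ltr_distlC distrC.
have sub : tball c (ratr rho) `<=` tball r e.
  move=> w /= Hw i.
  rewrite (_ : tnth w i - tnth r i = (tnth w i - tnth c i) + (tnth c i - tnth r i)); last first.
    by rewrite addrA subrK.
  apply: (le_lt_trans (ler_normD _ _)).
  rewrite (_ : e = e / 2 + e / 2); last by rewrite -splitr.
  apply: ltrD; apply: lt_trans rhoe; first exact: Hw.
  by rewrite distrC; exact: cP.
have m0 : mu (tball c (ratr rho)) = 0%E.
  apply/eqP; rewrite -measure_le0 -me; apply: le_measure => //;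
    rewrite inE; exact: tball_measurable.
exists (pickle (q, rho)) => //.
rewrite /F pickleK.
case: pselect => // _.
Qed.
End SuppNull.
Local Open Scope ereal_scope.

Lemma sum_In_ge0 (R : realType) T (s : seq T) (c : pred T) (F : T -> \bar R) :
  (forall x, List.In x s -> c x -> 0 <= F x) -> 0 <= \sum_(x <- s | c x) F x.
Proof.
elim: s => [|x s IH] H; first by rewrite big_nil.
rewrite big_cons; case: ifP => cx.
  by rewrite adde_ge0 //; [apply: H => //; left | apply: IH => y Hy; apply: H; right].
by apply: IH => y Hy; apply: H; right.
Qed.

Lemma lee_sum_In (R : realType) T (s : seq T) (c : pred T) (F G : T -> \bar R) :
  (forall x, List.In x s -> c x -> F x <= G x) ->
  \sum_(x <- s | c x) F x <= \sum_(x <- s | c x) G x.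
Proof.
elim: s => [|x s IH] H; first by rewrite !big_nil.
rewrite !big_cons; case: ifP => cx.
  by apply: leeD; [apply: H => //; left | apply: IH => y Hy; apply: H; right].
by apply: IH => y Hy; apply: H; right.
Qed.

Lemma measurable_sum_In d (X : measurableType d) (R : realType) T (s : seq T)
    (c : T -> X -> bool) (F : T -> X -> \bar R) :
  (forall x, List.In x s -> measurable_fun setT (c x)) ->
  (forall x, List.In x s -> measurable_fun setT (F x)) ->
  measurable_fun setT (fun v => \sum_(x <- s | c x v) F x v).
Proof.
elim: s => [|x s IH] Hc HF.
  by under eq_fun do rewrite big_nil; exact: measurable_cst.
under eq_fun do rewrite big_cons.
apply: measurable_fun_ifT.
- by apply: Hc; left.
- apply: emeasurable_funD; first by apply: HF; left.
  by apply: IH => y Hy; [apply: Hc | apply: HF]; right.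
- by apply: IH => y Hy; [apply: Hc | apply: HF]; right.
Qed.

Lemma measurable_asbool d (X : measurableType d) (A : set X) :
  measurable A -> measurable_fun setT (fun v => `[< A v >]).
Proof.
move=> mA; apply: (measurable_fun_bool true).
rewrite setTI; rewrite (_ : _ @^-1` _ = A) //.
apply/seteqP; split => v /=; first by move/asboolP.
by move=> Av; apply/asboolP.
Qed.

Lemma meas_integrand (R : realType) (np nr : nat) (v : np.-tuple R)
  (G : np.-tuple R * nr.-tuple R -> R) (U : np.-tuple R * nr.-tuple R -> np.-tuple R)
  (h : np.-tuple R -> \bar R) :
  measurable_fun setT G -> measurable_fun setT U -> measurable_fun setT h ->
  measurable_fun setT (fun r : nr.-tuple R => (G (v, r))%:E * h (U (v, r))).
Proof.
move=> mG mU mh; apply: emeasurable_funM.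
  apply/(measurable_realfun.measurable_EFinP _ _).2.
  exact: (measurable_fun_pair2 v mG).
apply: (measurableT_comp mh); exact: (measurable_fun_pair2 v mU).
Qed.

Arguments meas_integrand {R np nr}.

Section Gen.
Variables (R : realType) (L : finType) (np nr : nat) (Q : wpts R L np nr)
  (g : fork R L np nr -> np.-tuple R * nr.-tuple R -> R).

Definition WFg := forall t, List.In t (trans Q) -> measurable (t_guard t) /\
  forall f, List.In f (t_forks t) -> [/\ (0 <= f_prob f)%R,
    measurable_fun setT (f_upd f), measurable_fun setT (g f) &
    forall x, (0 <= g f x)%R].

Hypothesis HQ : WFg.

Lemma ewn_ge0 k l v : 0 <= ewn_gen Q g k l v.
Proof.
elim: k l v => [|k IH] l v /=; first by case: ifP.
case: ifP => // _; apply: sum_In_ge0 => t Ht _.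
have [_ Hf] := HQ t Ht.
apply: sum_In_ge0 => f Hfi _; have [p0 _ _ g0] := Hf f Hfi.
apply: mule_ge0; first by rewrite lee_fin.
apply: integral_ge0 => r _; apply: mule_ge0 => //; by rewrite lee_fin.
Qed.

Lemma ewn_meas k l : measurable_fun setT (ewn_gen Q g k l).
Proof.
elim: k l => [|k IH] l.
  suff H : measurable_fun setT (fun v => ewn_gen Q g 0 l v) by exact: H.
  by rewrite /=; case: (term Q l); exact: measurable_cst.
suff H : measurable_fun setT (fun v => ewn_gen Q g k.+1 l v) by exact: H.
rewrite /=; case: (term Q l); first exact: measurable_cst.
apply: measurable_sum_In => t Ht.
  apply: measurable_and; first exact: measurable_cst.
  by apply: measurable_asbool; have [] := HQ t Ht.
have [_ Hf] := HQ t Ht.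
apply: measurable_sum_In => f Hfi; first exact: measurable_cst.
have [p0 mu mg g0] := Hf f Hfi.
apply: emeasurable_funM; first exact: measurable_cst.
pose h := fun z : np.-tuple R * nr.-tuple R =>
   ((g f z)%:E * ewn_gen Q g k (f_dest f) (f_upd f z)).
have -> : (fun v => \int[distr Q]_r ((g f (v, r))%:E * ewn_gen Q g k (f_dest f) (f_upd f (v, r))))
   = fubini_F (distr Q) h by [].
apply: measurable_fun_fubini_tonelli_F.
  apply: emeasurable_funM.
    exact/(measurable_realfun.measurable_EFinP _ _).2.
  exact: measurableT_comp.
by move=> z; apply: mule_ge0; [rewrite lee_fin | exact: ewn_ge0].
Qed.

Lemma ewn_nd l v : nondecreasing_seq (fun k => ewn_gen Q g k l v).
Proof.
apply/nondecreasing_seqP => k; elim: k l v => [|k IH] l v /=.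
  case: (term Q l) => //; apply: sum_In_ge0 => t Ht _.
  have [_ Hf] := HQ t Ht; apply: sum_In_ge0 => f Hfi _; have [p0 _ _ g0] := Hf f Hfi.
  apply: mule_ge0; first by rewrite lee_fin.
  apply: integral_ge0 => r _.
  apply: mule_ge0; first by rewrite lee_fin; exact: g0.
  by case: (term Q _).
case: (term Q l) => //; apply: lee_sum_In => t Ht _.
have [_ Hf] := HQ t Ht; apply: lee_sum_In => f Hfi _; have [p0 mu mg g0] := Hf f Hfi.
apply: lee_wpmul2l; first by rewrite lee_fin.
apply: ge0_le_integral => //.
- by move=> r _; apply: mule_ge0; [rewrite lee_fin; exact: g0 | exact: ewn_ge0].
- exact: (meas_integrand v _ _ _ mg mu (ewn_meas k (f_dest f))).
- exact: (meas_integrand v _ _ _ mg mu (ewn_meas k.+1 (f_dest f))).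
- by move=> r _; apply: lee_wpmul2l; [rewrite lee_fin; exact: g0 | exact: IH].
Qed.

End Gen.
Arguments WFg {R L np nr}.
Arguments ewn_ge0 {R L np nr Q g}.
Arguments ewn_meas {R L np nr Q g}.
Arguments ewn_nd {R L np nr Q g}.

Lemma big_In_cond (R : realType) T (s : seq T) (c : pred T) (F : T -> \bar R) :
  (forall x, List.In x s -> c x) ->
  \sum_(x <- s | c x) F x = \sum_(x <- s) F x.
Proof.
elim: s => [|x s IH] H; first by rewrite !big_nil.
rewrite !big_cons H; last by left.
by rewrite IH // => y Hy; apply: H; right.
Qed.

Lemma filter_cons_In T (p : pred T) (s : seq T) x r :
  seq.filter p s = x :: r -> List.In x s /\ p x.
Proof.
elim: s => [|y s IH] //=; case: ifP => py.
  by case=> E _; subst y; split => //; left.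
by move/IH => [? ?]; split => //; right.
Qed.

Lemma In_map T U (F : T -> U) (s : seq T) y :
  List.In y (map F s) -> exists x, List.In x s /\ y = F x.
Proof.
elim: s => [|x s IH] //= [<-|/IH [z [Hz ->]]]; first by exists x; split => //; left.
by exists z; split => //; right.
Qed.

Lemma In_cat T (s1 s2 : seq T) y : List.In y (s1 ++ s2) -> List.In y s1 \/ List.In y s2.
Proof.
elim: s1 => [|x s1 IH] /=; first by right.
by case=> [->|/IH [H|H]]; [left; left|left; right|right].
Qed.

Lemma In_flatten_map T U (F : T -> seq U) (s : seq T) y :
  List.In y (flatten (map F s)) -> exists x, List.In x s /\ List.In y (F x).
Proof.
elim: s => [|x s IH] //= H; have [H1|/IH [z [Hz H2]]] := @In_cat _ _ _ _ H.
  by exists x; split => //; left.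
by exists z; split => //; right.
Qed.

Arguments In_flatten_map {T U F s y}.
Arguments In_map {T U F s y}.
Arguments filter_cons_In {T p s x r}.
Arguments In_cat {T s1 s2 y}.

Lemma eq_big_In (R : realType) T (s : seq T) (F G : T -> \bar R) :
  (forall x, List.In x s -> F x = G x) -> \sum_(x <- s) F x = \sum_(x <- s) G x.
Proof.
elim: s => [|x s IH] H; first by rewrite !big_nil.
by rewrite !big_cons H; [rewrite IH // => y Hy; apply: H; right | left].
Qed.

Lemma all_In T (p : pred T) s x : all p s -> List.In x s -> p x.
Proof.
elim: s => [|y s IH] //= /andP[py ps] [<-|H] //; exact: IH.
Qed.

Arguments all_In {T p s x}.

Lemma prob_integral_cst d (X : measurableType d) (R : realType)
  (mu : probability X R) (c : R) : \int[mu]_x (c%:E) = c%:E.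
Proof.
rewrite (_ : (fun _ => c%:E) = cst c%:E) //.
rewrite integral_cst // -[RHS]mule1; congr (_ * _); exact: probability_setT.
Qed.

Section Main.
Variables (R : realType) (L : finType) (np nr : nat) (P : wpts R L np nr)
  (B : 'I_np -> interval R) (M : np.-tuple R -> R).
Hypotheses (wfP : well_formed P) (sae : score_at_end P) (tout : term P (lout P))
  (M0 : forall v, (0 <= M v)%R) (mM : measurable_fun setT M).

Local Notation T := (truncated P B M).
Local Notation ewP := (ewn_gen P (@f_wt R L np nr)).
Local Notation ewT := (ewn_gen T (@f_wt R (option L) np nr)).

Lemma PhiB_meas : measurable (PhiB B).
Proof.
have -> : PhiB B = \bigcap_(i in [set: 'I_np])
   (setT `&` (fun w => tnth w i) @^-1` [set` B i]).
  apply/seteqP; split => w /=.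
    by move=> H i _; split => //=; exact: H.
  by move=> H i; have [_ /=] := H i Logic.I.
apply: fin_bigcap_measurable; first exact: finite_finset.
move=> i _; apply: (measurable_tnth i) => //; exact: measurable_itv.
Qed.

Lemma wfP' : WFg P (@f_wt R L np nr).
Proof.
case: wfP => Ht _ _ _ t Hti; have [mg Hf _] := Ht t Hti; split => // f Hfi.
by have [/andP[p0 _] mu mw w0] := Hf f Hfi; split => //; exact: ltW.
Qed.

Lemma wfT : WFg T (@f_wt R (option L) np nr).
Proof.
case: wfP => Ht _ _ _ t' /In_flatten_map [t [Hti Ht']].
have [mg Hf _] := Ht t Hti.
move: Ht'; rewrite /trunc_trans; case: ifP => _ //= [<-|[<-|[]]].
- split; first exact: measurableI mg PhiB_meas.
  move=> f' /In_map [f [Hfi ->]].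
  by have [/andP[p0 _] mu mw w0] := Hf f Hfi; split => //; exact: ltW.
- split; first by apply: measurableI mg _; apply: measurableC; exact: PhiB_meas.
  move=> f' /In_map [f [Hfi ->]].
  have [/andP[p0 _] mu mw w0] := Hf f Hfi.
  rewrite /sharp_fork; case: ifP => _; first by split => //; exact: ltW.
  split => //=; first exact: ltW.
  exact: measurableT_comp mM measurable_fst.
Qed.

Definition en (l : L) (v : np.-tuple R) (t : transition R L np nr) :=
  (t_src t == l) && `[< t_guard t v >].

Lemma en_uniq l v : ~~ term P l -> exists t0, seq.filter (en l v) (trans P) = [:: t0].
Proof.
case: wfP => _ Hc _ _ nt; have := Hc l nt v; rewrite -size_filter -/(en l v).
by case: (seq.filter _ _) => [|t0 [|]] //; exists t0.
Qed.

Lemma EP k l v t0 : ~~ term P l -> seq.filter (en l v) (trans P) = [:: t0] ->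
  ewP k.+1 l v = \sum_(f <- t_forks t0) (f_prob f)%:E *
     \int[distr P]_r ((f_wt f (v, r))%:E * ewP k (f_dest f) (f_upd f (v, r))).
Proof. by move=> nt Hf; rewrite /= (negbTE nt) -big_filter Hf big_seq1. Qed.

Lemma ET k l v t0 : ~~ term P l -> seq.filter (en l v) (trans P) = [:: t0] ->
  ewT k.+1 (Some l) v = if `[< PhiB B v >] then
     \sum_(f <- t_forks t0) (f_prob f)%:E * \int[distr P]_r
        ((f_wt f (v, r))%:E * ewT k (Some (f_dest f)) (f_upd f (v, r)))
  else \sum_(f <- t_forks t0) (f_prob (sharp_fork P M f))%:E * \int[distr P]_r
        ((f_wt (sharp_fork P M f) (v, r))%:E *
          ewT k (f_dest (sharp_fork P M f)) (f_upd (sharp_fork P M f) (v, r))).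
Proof.
move=> nt Hf; have [Ht0 /andP[/eqP s0 /asboolP g0]] := filter_cons_In Hf.
have nl : t_src t0 != lout P by rewrite s0; apply: contraNneq nt => ->.
rewrite /= (negbTE nt) big_flatten /= big_map.
rewrite -(@big_rmcond _ _ _ _ _ (en l v)); last first.
  move=> t; rewrite /en /trunc_trans; case: ifP => _; first by rewrite big_nil.
  rewrite negb_and => Hn; rewrite big_cons big_cons big_nil /=.
  have C : forall Q : Prop, (Some (t_src t) == Some l) && `[< t_guard t v /\ Q >] = false.
    move=> Q; case/orP: Hn => H.
      rewrite (_ : (Some (t_src t) == Some l) = false) //.
      by apply/eqP => -[E]; rewrite E eqxx in H.
    rewrite asboolF ?andbF // => -[gv _]; move/negP: H; apply; exact/asboolP.
  by rewrite !C.
rewrite -big_filter Hf big_seq1 /trunc_trans (negbTE nl) big_cons big_cons big_nil /=.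
rewrite s0 eqxx /=.
case: (pselect (PhiB B v)) => H.
  rewrite (asboolT H) asboolT // asboolF; last by case.
  by rewrite adde0 big_map.
rewrite (asboolF H) asboolF; last by case.
by rewrite asboolT // adde0 big_map.
Qed.

Lemma forks_out t : List.In t (trans P) ->
  has (fun f => f_dest f != lout P) (t_forks t) ->
  all (fun f => f_dest f != lout P) (t_forks t).
Proof.
case: sae => _ _ H3 _ Ht; case E: (has (fun f => f_dest f == lout P) (t_forks t)).
  have [F [EF dF _ _ _]] := H3 t Ht E.
  by rewrite EF /= dF eqxx.
by move=> _; move/negbT: E; rewrite -all_predC.
Qed.

Lemma ewT_None k x : ewT k None x = 1.
Proof. by case: k. Qed.

Lemma ET_lift k l v t0 : ~~ term P l -> seq.filter (en l v) (trans P) = [:: t0] ->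
  PhiB B v \/ ~~ has (fun f => f_dest f != lout P) (t_forks t0) ->
  ewT k.+1 (Some l) v = \sum_(f <- t_forks t0) (f_prob f)%:E * \int[distr P]_r
        ((f_wt f (v, r))%:E * ewT k (Some (f_dest f)) (f_upd f (v, r))).
Proof.
move=> nt Hf H; rewrite (@ET k _ _ _ nt Hf); case: H => [Hp|Hh]; first by rewrite asboolT.
case: ifP => // _; apply: eq_big_In => f Hfi.
move: Hh; rewrite -all_predC => /all_In /(_ Hfi) /= /negPn Hd.
by rewrite /sharp_fork Hd.
Qed.

Lemma ET_exit k l v t0 : ~~ term P l -> seq.filter (en l v) (trans P) = [:: t0] ->
  ~ PhiB B v -> has (fun f => f_dest f != lout P) (t_forks t0) ->
  ewT k.+1 (Some l) v = (M v)%:E.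
Proof.
move=> nt Hf Hp Hh; rewrite (@ET k _ _ _ nt Hf) asboolF //.
have [Ht0 _] := filter_cons_In Hf.
have Hall := @forks_out t0 Ht0 Hh.
case: wfP => Ht _ _ _; have [_ _ Hs] := Ht t0 Ht0.
rewrite (@eq_big_In _ _ _ _ (fun f => ((f_prob f) * M v)%:E)); last first.
  move=> f Hfi; have Hd := all_In Hall Hfi.
  rewrite /sharp_fork (negbTE Hd) /=.
  under eq_integral do rewrite ewT_None mule1.
  by rewrite prob_integral_cst EFinM.
by rewrite sumEFin -mulr_suml Hs mul1r.
Qed.


Lemma ae_le_int (G : np.-tuple R * nr.-tuple R -> R)
    (U : np.-tuple R * nr.-tuple R -> np.-tuple R) (h1 h2 : np.-tuple R -> \bar R) v :
  measurable_fun setT G -> measurable_fun setT U ->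
  measurable_fun setT h1 -> measurable_fun setT h2 ->
  (forall x, (0 <= G x)%R) -> (forall x, 0 <= h1 x) -> (forall x, 0 <= h2 x) ->
  (forall r, supp (distr P) r -> h1 (U (v, r)) <= h2 (U (v, r))) ->
  \int[distr P]_r ((G (v, r))%:E * h1 (U (v, r))) <=
  \int[distr P]_r ((G (v, r))%:E * h2 (U (v, r))).
Proof.
move=> mG mU m1 m2 G0 h10 h20 H.
apply: ae_ge0_le_integral => //.
- by move=> r _; apply: mule_ge0; [rewrite lee_fin | exact: h10].
- exact: (meas_integrand v _ _ _ mG mU m1).
- by move=> r _; apply: mule_ge0; [rewrite lee_fin | exact: h20].
- exact: (meas_integrand v _ _ _ mG mU m2).
have [N [mN N0 sub]] := @supp_negligible _ _ (distr P).
exists N; split => // r /= Hr; apply: sub => Hs; apply: Hr => _.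
by apply: lee_wpmul2l; [rewrite lee_fin | exact: H].
Qed.

Lemma ew_meas l : measurable_fun setT (ew P l).
Proof.
apply: (emeasurable_fun_cvg (fun k => ewP k l)) => [k|v _].
  exact: (ewn_meas wfP').
exact: (ereal_nondecreasing_cvgn (ewn_nd wfP' l v)).
Qed.

Lemma ew_ge k l v : ewP k l v <= ew P l v.
Proof. by apply: ereal_sup_ubound; exists k. Qed.

Lemma ew_ge0 l v : 0 <= ew P l v.
Proof. exact: le_trans (ewn_ge0 wfP' 0 l v) (ew_ge 0 l v). Qed.

Definition Hyp1 := forall t, List.In t (trans P) ->
      has (fun f => f_dest f != lout P) (t_forks t) ->
      forall v, reachable P (t_src t) v -> t_guard t v -> ~ PhiB B v ->
      (ew P (t_src t) v <= (M v)%:E)%E.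

Definition Hyp2 := forall t, List.In t (trans P) ->
      has (fun f => f_dest f != lout P) (t_forks t) ->
      forall v, reachable P (t_src t) v -> t_guard t v -> ~ PhiB B v ->
      ((M v)%:E <= ew P (t_src t) v)%E.

Lemma part1 (H1 : Hyp1) k : forall l v, reachable P l v ->
  ewP k l v <= ewT k (Some l) v.
Proof.
elim: k => [|k IH] l v Hr; first by rewrite /=.
case Ht: (term P l); first by rewrite /= Ht.
have nt : ~~ term P l by rewrite Ht.
have [t0 Hf] := en_uniq l v nt.
have [Ht0 /andP[/eqP s0 /asboolP g0]] := filter_cons_In Hf.
case: (pselect (~ PhiB B v /\ has (fun f => f_dest f != lout P) (t_forks t0))) => [[Hp Hh]|Hn].
  rewrite (@ET_exit k _ _ _ nt Hf Hp Hh); apply: le_trans (ew_ge _ _ _) _.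
  have := H1 t0 Ht0 Hh v; rewrite s0; apply => //.
have Hl : PhiB B v \/ ~~ has (fun f => f_dest f != lout P) (t_forks t0).
  case: (pselect (PhiB B v)) => Hp; [by left | right].
  by apply/negP => Hh; apply: Hn.
rewrite (@EP k _ _ _ nt Hf) (@ET_lift k _ _ _ nt Hf Hl).
apply: lee_sum_In => f Hfi _.
have [_ Hff] := wfP' t0 Ht0; have [p0 mu mw w0] := Hff f Hfi.
apply: lee_wpmul2l; first by rewrite lee_fin.
apply: ae_le_int => //.
- exact: (ewn_meas wfP').
- exact: (ewn_meas wfT).
- exact: (ewn_ge0 wfP').
- exact: (ewn_ge0 wfT).
move=> r Hs; apply: IH.
exact: (reach_step Hr nt Ht0 s0 g0 Hfi Hs).
Qed.

Lemma bellman l v t0 : ~~ term P l -> seq.filter (en l v) (trans P) = [:: t0] ->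
  \sum_(f <- t_forks t0) (f_prob f)%:E * \int[distr P]_r
     ((f_wt f (v, r))%:E * ew P (f_dest f) (f_upd f (v, r))) <= ew P l v.
Proof.
move=> nt Hf; have [Ht0 _] := filter_cons_In Hf.
have [_ Hff] := wfP' t0 Ht0.
pose c := fun f : fork R L np nr => `[< [/\ (0 <= f_prob f)%R,
    measurable_fun setT (f_upd f), measurable_fun setT (f_wt f) &
    forall x, (0 <= f_wt f x)%R] >].
have Ec : forall F : fork R L np nr -> \bar R,
    \sum_(f <- t_forks t0 | c f) F f = \sum_(f <- t_forks t0) F f.
  by move=> F; apply: big_In_cond => f Hfi; apply/asboolP; exact: Hff.
have HS : (fun j => \sum_(f <- t_forks t0 | c f) (f_prob f)%:E * \int[distr P]_r
     ((f_wt f (v, r))%:E * ewP j (f_dest f) (f_upd f (v, r)))) @ \oo -->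
   \sum_(f <- t_forks t0 | c f) (f_prob f)%:E * \int[distr P]_r
     ((f_wt f (v, r))%:E * ew P (f_dest f) (f_upd f (v, r))).
  apply: cvg_nnesum => f /asboolP [p0 mu mw w0].
    apply: nearW => j; apply: mule_ge0; first by rewrite lee_fin.
    apply: integral_ge0 => r _; apply: mule_ge0; first by rewrite lee_fin.
    exact: (ewn_ge0 wfP').
  apply: cvgeZl => //.
  have := @cvg_monotone_convergence _ _ _ (distr P) setT measurableT
    (fun j r => (f_wt f (v, r))%:E * ewP j (f_dest f) (f_upd f (v, r))).
  have E : (fun r => limn (fun j => (f_wt f (v, r))%:E * ewP j (f_dest f) (f_upd f (v, r))))
     = (fun r => (f_wt f (v, r))%:E * ew P (f_dest f) (f_upd f (v, r))).
    apply/funext => r; apply/cvg_lim => //; apply: cvgeZl => //.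
    exact: (ereal_nondecreasing_cvgn (ewn_nd wfP' _ _)).
  rewrite -E; apply.
  - move=> j; exact: (meas_integrand v _ _ _ mw mu (ewn_meas wfP' j (f_dest f))).
  - move=> j r _; apply: mule_ge0; first by rewrite lee_fin.
    exact: (ewn_ge0 wfP').
  - move=> r _ a b ab; apply: lee_wpmul2l; first by rewrite lee_fin.
    exact: (ewn_nd wfP').
rewrite -Ec; apply: (cvge_le _ HS); apply: nearW => j.
rewrite Ec -(@EP j _ _ _ nt Hf); exact: ew_ge.
Qed.

Lemma part2 (H2 : Hyp2) k : forall l v, reachable P l v ->
  ewT k (Some l) v <= ew P l v.
Proof.
elim: k => [|k IH] l v Hr.
  have -> : ewT 0 (Some l) v = ewP 0 l v by [].
  exact: ew_ge.
case Ht: (term P l).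
  have -> : ewT k.+1 (Some l) v = ewP k.+1 l v by rewrite /= Ht.
  exact: ew_ge.
have nt : ~~ term P l by rewrite Ht.
have [t0 Hf] := en_uniq l v nt.
have [Ht0 /andP[/eqP s0 /asboolP g0]] := filter_cons_In Hf.
case: (pselect (~ PhiB B v /\ has (fun f => f_dest f != lout P) (t_forks t0))) => [[Hp Hh]|Hn].
  rewrite (@ET_exit k _ _ _ nt Hf Hp Hh).
  have := H2 t0 Ht0 Hh v; rewrite s0; apply => //.
have Hl : PhiB B v \/ ~~ has (fun f => f_dest f != lout P) (t_forks t0).
  case: (pselect (PhiB B v)) => Hp; [by left | right].
  by apply/negP => Hh; apply: Hn.
rewrite (@ET_lift k _ _ _ nt Hf Hl).
apply: le_trans (@bellman l v t0 nt Hf).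
apply: lee_sum_In => f Hfi _.
have [_ Hff] := wfP' t0 Ht0; have [p0 mu mw w0] := Hff f Hfi.
apply: lee_wpmul2l; first by rewrite lee_fin.
apply: ae_le_int => //.
- exact: (ewn_meas wfT).
- exact: ew_meas.
- exact: (ewn_ge0 wfT).
- exact: ew_ge0.
move=> r Hs; apply: IH.
exact: (reach_step Hr nt Ht0 s0 g0 Hfi Hs).
Qed.
End Main.
Local Close Scope ereal_scope.

Theorem theoremC2 (R : realType) (L : finType) (np nr : nat)
    (P : wpts R L np nr) (B : 'I_np -> interval R) (M : np.-tuple R -> R) :
  well_formed P -> score_at_end P -> term P (lout P) ->
  (forall x, itv_bounded (B x)) ->
  (forall v, 0 <= M v) -> (exists C : R, forall v, M v <= C) ->
  measurable_fun setT M ->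
  ((forall t, List.In t (trans P) ->
      has (fun f => f_dest f != lout P) (t_forks t) ->
      forall v, reachable P (t_src t) v -> t_guard t v -> ~ PhiB B v ->
      (ew P (t_src t) v <= (M v)%:E)%E) ->
    forall v, supp (mu_init P) v ->
      (denot P v <= denot (truncated P B M) v)%E)
  /\
  ((forall t, List.In t (trans P) ->
      has (fun f => f_dest f != lout P) (t_forks t) ->
      forall v, reachable P (t_src t) v -> t_guard t v -> ~ PhiB B v ->
      ((M v)%:E <= ew P (t_src t) v)%E) ->
    forall v, supp (mu_init P) v ->
      (denot (truncated P B M) v <= denot P v)%E).
Proof.
move=> wf sae tout _ M0 _ mM; split.
  move=> H1 v Hv; have Hr : reachable P (linit P) v by exact: reach_init. rewrite /denot /=.
  apply: ge_ereal_sup => _ [k _ <-].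
  apply: le_trans (@part1 _ _ _ _ P B M wf sae tout M0 mM H1 k _ _ Hr) _.
  by apply: ereal_sup_ubound; exists k.
move=> H2 v Hv; have Hr : reachable P (linit P) v by exact: reach_init.
rewrite /denot /=.
apply: ge_ereal_sup => _ [k _ <-].
exact: (@part2 _ _ _ _ P B M wf sae tout M0 mM H2 k _ _ Hr).
Qed.
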